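(* Let $q=p^e$ with $p$ prime, $e\ge1$, and $0\le s<e$. For $i=1,2$ let $C_i$ be an $[n,k_i,d_i]_q$ linear code over $\mathbb{F}_q$ with generator matrix $G_i$ and parity-check matrix $H_i$. Suppose $k_1+k_2\ge n$ and that either $$\mathrm{rk}\begin{pmatrix}G_1\\ H_2^{(p^{e-s})}\end{pmatrix}\le k_1\quad\text{or}\quad \mathrm{rk}\big(G_1(G_2^{(p^{e-s})})^T\big)=k_1-\dim_{\mathbb{F}_q}(C_1\cap C_2^{\perp_s})\le k_1+k_2-n.$$ Then there exists a quantum code with parameters $[[n,k_1+k_2-n,d]]_q$ with $d\ge\min\{d_1,d_2\}$.
   Context: For a matrix $A=(a_{ij})$ over $\mathbb{F}_q$, $A^{(p^{e-s})}=(a_{ij}^{p^{e-s}})$ (entrywise power), and $A^T$ is the transpose. For $\mathbf{x},\mathbf{y}\in\mathbb{F}_q^n$ the $s$-Galois form is $[\mathbf{x},\mathbf{y}]_s=\sum_{i=1}^n x_iy_i^{p^s}$; for a code $C$, $C^{\perp_s}=\{\mathbf{x}\in\mathbb{F}_q^n: [\mathbf{c},\mathbf{x}]_s=0\ \forall \mathbf{c}\in C\}$. Quantum codes: let $V_n=(\mathbb{C}^q)^{\otimes n}$ with orthonormal basis $\{|\mathbf{c}\rangle:\mathbf{c}\in\mathbb{F}_q^n\}$. For $a,b\in\mathbb{F}_q$ define $X(a)|x\rangle=|x+a\rangle$, $Z(b)|x\rangle=\omega^{\mathrm{tr}(bx)}|x\rangle$ with $\omega=e^{2\pi i/p}$ and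 $\mathrm{tr}:\mathbb{F}_q\to\mathbb{F}_p$ the trace; for $\mathbf{a},\mathbf{b}\in\mathbb{F}_q^n$ let $X(\mathbf{a})=\bigotimes_i X(a_i)$, $Z(\mathbf{b})=\bigotimes_i Z(b_i)$. The error group is $G_n=\{\omega^cX(\mathbf{a})Z(\mathbf{b})\}$, and the weight of $\omega^cX(\mathbf{a})Z(\mathbf{b})$ is the number of $i$ with $(a_i,b_i)\ne(0,0)$. A quantum code with parameters $[[n,k,d]]_q$ is a subspace $Q\subseteq V_n$ of dimension $q^k$ with minimum distance $d$: for all $|u\rangle,|v\rangle\in Q$ with $\langle u|v\rangle=0$ and every $E\in G_n$ of weight at most $d-1$, $\langle u|E|v\rangle=0$ (with the standard purity-based convention when $k=0$). *)

(* Defs.v *)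
From HB Require Import structures.
From mathcomp Require Import all_boot all_order all_algebra all_field.
Set Implicit Arguments. Unset Strict Implicit. Unset Printing Implicit Defensive.
Import Order.TTheory GRing.Theory Num.Theory.
Local Open Scope ring_scope.

Section Defs.
Variables (F : finFieldType) (n : nat).

Definition hwt (x : 'rV[F]_n) : nat := #|[set i : 'I_n | x ord0 i != 0]|.

Definition min_dist (m : nat) (G : 'M[F]_(m, n)) (d : nat) : Prop :=
  (exists2 c : 'rV[F]_n, (c <= G)%MS & (c != 0) && (hwt c == d)) /\
  (forall c : 'rV[F]_n, (c <= G)%MS -> c != 0 -> (d <= hwt c)%N).

Definition lin_code_gen_par (k d : nat) (G : 'M[F]_(k, n)) (H : 'M[F]_(n - k, n))
  : Prop :=
  [/\ row_free G, row_free H,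
      (forall x : 'rV[F]_n, (x <= G)%MS = (H *m x^T == 0)) & min_dist G d].

Definition mxpow (r c m : nat) (A : 'M[F]_(r, c)) : 'M[F]_(r, c) :=
  map_mx (fun a => a ^+ m) A.

Definition gform (p s : nat) (x y : 'rV[F]_n) : F :=
  \sum_(i < n) x ord0 i * (y ord0 i) ^+ (p ^ s).

Definition in_gdual (p s m : nat) (G : 'M[F]_(m, n)) (x : 'rV[F]_n) : bool :=
  [forall c : 'rV[F]_n, (c <= G)%MS ==> (gform p s c x == 0)].

Definition dim_cap_gdual (p s m1 m2 : nat) (G1 : 'M[F]_(m1, n)) (G2 : 'M[F]_(m2, n))
  : nat :=
  \dim (<< enum [set x : 'rV[F]_n | (x <= G1)%MS && in_gdual p s G2 x] >>)%VS.

(* trace F_q -> F_p, tr(x) = sum_{i<e} x^(p^i), read as an integer in [0,p) *)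
Definition trF (p e : nat) (x : F) : F := \sum_(i < e) x ^+ (p ^ i).
Definition tr_nat (p e : nat) (x : F) : nat :=
  if [pick k : 'I_p | (k%:R : F) == trF p e x] is Some k then k else 0%N.

(* omega = e^{2 pi i / p} in algC *)
Definition omega (p : nat) : algC := (p.-root (-1)) ^+ 2.

(* state space V_n = (C^q)^{tensor n}: functions F_q^n -> C (coordinates in the
   basis |c>) *)
Definition qstate := {ffun 'rV[F]_n -> algC^o}.

Definition qinner (u v : qstate) : algC := \sum_x (u x)^* * v x.

(* action of  omega^c X(a) Z(b) :
   X(a)Z(b)|x> = omega^{tr(b.x)} |x+a>, so the coordinate at y is
   omega^c omega^{sum_i tr(b_i (y-a)_i)} v(y-a) *)
Definition qerr (p e c : nat) (a b : 'rV[F]_n) (v : qstate) : qstate :=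
  [ffun y : 'rV[F]_n => omega p ^+ c *
             omega p ^+ (\sum_(i < n) tr_nat p e ((b ord0 i * (y - a) ord0 i)%R)) *
             v (y - a)].

Definition qweight (a b : 'rV[F]_n) : nat :=
  #|[set i : 'I_n | (a ord0 i != 0) || (b ord0 i != 0)]|.

(* minimum distance d (purity convention when k = 0) *)
Definition qmin_dist (p e : nat) (Q : {vspace qstate}) (k d : nat) : Prop :=
  if k == 0%N then
    forall u, u \in Q -> forall (c : nat) (a b : 'rV[F]_n),
      (1 <= qweight a b <= d.-1)%N -> qinner u (qerr p e c a b u) = 0
  else
    forall u v, u \in Q -> v \in Q -> qinner u v = 0 ->
      forall (c : nat) (a b : 'rV[F]_n),
        (qweight a b <= d.-1)%N -> qinner u (qerr p e c a b v) = 0.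

Definition is_qcode (p e : nat) (Q : {vspace qstate}) (k d : nat) : Prop :=
  \dim Q = (#|F| ^ k)%N /\ qmin_dist p e Q k d.

End Defs.

(* Main.v *)
Require Import Defs.
From HB Require Import structures.
From mathcomp Require Import all_boot all_order all_algebra all_field.
Import Order.TTheory GRing.Theory Num.Theory.
Local Open Scope ring_scope.
Set Implicit Arguments. Unset Strict Implicit. Unset Printing Implicit Defensive.
From mathcomp Require Import zify ring.

Lemma frobD (F : finFieldType) p (chp : p \in [pchar F]) k (x y : F) :
  (x + y) ^+ (p ^ k) = x ^+ (p ^ k) + y ^+ (p ^ k).
Proof.
elim: k => [|k IH]; first by rewrite !expn0 !expr1.
by rewrite expnSr !exprM IH -!(pFrobenius_autE chp) rmorphD.
Qed.

Lemma frob0 (F : finFieldType) p (chp : p \in [pchar F]) k :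
  (0 : F) ^+ (p ^ k) = 0.
Proof. by rewrite expr0n eqn0Ngt expn_gt0 prime_gt0 ?(pcharf_prime chp). Qed.

Lemma frobN (F : finFieldType) p (chp : p \in [pchar F]) k (x : F) :
  (- x) ^+ (p ^ k) = - x ^+ (p ^ k).
Proof.
apply/eqP; rewrite -subr_eq0 opprK addrC -frobD // subrr frob0 //.
Qed.

Lemma frob_sum (F : finFieldType) p (chp : p \in [pchar F]) k (I : finType) (f : I -> F) :
  (\sum_i f i) ^+ (p ^ k) = \sum_i (f i) ^+ (p ^ k).
Proof.
exact: (big_morph (fun x : F => x ^+ (p ^ k)) (frobD chp k) (frob0 chp k)).
Qed.

Lemma frobK (F : finFieldType) p e (chp : p \in [pchar F]) (cF : #|F| = (p ^ e)%N) a b (x : F) :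
  (a + b = e)%N -> (x ^+ (p ^ a)) ^+ (p ^ b) = x.
Proof. by move=> hab; rewrite -exprM -expnD hab -cF expf_card. Qed.

Lemma frob_eq0 (F : finFieldType) p (chp : p \in [pchar F]) k (x : F) :
  (x ^+ (p ^ k) == 0) = (x == 0).
Proof. by rewrite expf_eq0 expn_gt0 prime_gt0 ?(pcharf_prime chp). Qed.

Lemma mxpowM (F : finFieldType) p (chp : p \in [pchar F]) k m n l
  (A : 'M[F]_(m, n)) (B : 'M[F]_(n, l)) :
  mxpow (p ^ k) (A *m B) = mxpow (p ^ k) A *m mxpow (p ^ k) B.
Proof.
apply/matrixP => i j; rewrite !mxE frob_sum //; apply: eq_bigr => t _.
by rewrite !mxE exprMn.
Qed.

Lemma mxpow_tr (F : finFieldType) m r c (A : 'M[F]_(r, c)) :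
  (mxpow m A)^T = mxpow m A^T.
Proof. exact: map_trmx. Qed.

Lemma mxpowK (F : finFieldType) p e (chp : p \in [pchar F]) (cF : #|F| = (p ^ e)%N)
  a b r c (A : 'M[F]_(r, c)) :
  (a + b = e)%N -> mxpow (p ^ b) (mxpow (p ^ a) A) = A.
Proof. by move=> hab; apply/matrixP => i j; rewrite !mxE (frobK chp cF). Qed.

Lemma mxpow0 (F : finFieldType) p (chp : p \in [pchar F]) k r c :
  mxpow (p ^ k) (0 : 'M[F]_(r, c)) = 0.
Proof. by apply/matrixP => i j; rewrite !mxE frob0. Qed.

Lemma mxpow_eq0 (F : finFieldType) p (chp : p \in [pchar F]) k r c (A : 'M[F]_(r, c)) :
  (mxpow (p ^ k) A == 0) = (A == 0).
Proof.
apply/eqP/eqP => [h|->]; last exact: mxpow0.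
apply/matrixP => i j; move/matrixP: h => /(_ i j); rewrite !mxE => /eqP.
by rewrite frob_eq0 // => /eqP.
Qed.

Lemma rank_mxpow_le (F : finFieldType) p (chp : p \in [pchar F]) k r c (A : 'M[F]_(r, c)) :
  (\rank (mxpow (p ^ k) A) <= \rank A)%N.
Proof.
rewrite -{1}(mulmx_base A) (mxpowM chp).
exact: leq_trans (mxrankM_maxr _ _) (rank_leq_row _).
Qed.

Lemma rank_mxpow (F : finFieldType) p e (chp : p \in [pchar F]) (cF : #|F| = (p ^ e)%N)
  k r c (A : 'M[F]_(r, c)) : (k <= e)%N ->
  \rank (mxpow (p ^ k) A) = \rank A.
Proof.
move=> ke; apply/eqP; rewrite eqn_leq rank_mxpow_le //=.
rewrite -{1}(mxpowK chp cF (a := k) (b := e - k) A) ?subnKC //.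
exact: rank_mxpow_le.
Qed.

Lemma submx_mxpow (F : finFieldType) p (chp : p \in [pchar F]) k r1 r2 c
  (A : 'M[F]_(r1, c)) (B : 'M[F]_(r2, c)) :
  (A <= B)%MS -> (mxpow (p ^ k) A <= mxpow (p ^ k) B)%MS.
Proof. by case/submxP => D ->; rewrite (mxpowM chp) submxMl. Qed.

Lemma hwt_mxpow (F : finFieldType) p (chp : p \in [pchar F]) k n (x : 'rV[F]_n) :
  hwt (mxpow (p ^ k) x) = hwt x.
Proof.
rewrite /hwt; apply: eq_card => i; rewrite !inE mxE.
by rewrite frob_eq0.
Qed.

Lemma HG0 (F : finFieldType) n k d (G : 'M[F]_(k, n)) (H : 'M[F]_(n - k, n)) :
  lin_code_gen_par d G H -> H *m G^T = 0.
Proof.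
case=> _ _ par _; apply/matrixP => a b.
have := par (row b G); rewrite row_sub => /esym/eqP/matrixP/(_ a 0).
rewrite mxE [RHS]mxE => h; rewrite !mxE; transitivity (\sum_j H a j * (row b G)^T j 0); last exact: h; apply: eq_bigr => j _; by rewrite !mxE.
Qed.

Lemma kerH (F : finFieldType) n k d (G : 'M[F]_(k, n)) (H : 'M[F]_(n - k, n)) :
  lin_code_gen_par d G H -> forall y : 'rV[F]_n, y *m G^T = 0 -> (y <= H)%MS.
Proof.
move=> hc y hy; have hHG := HG0 hc; case: hc => rG rH _ _.
have sHK : (H <= kermx G^T)%MS by apply/sub_kermxP.
have := mxrank_leqif_sup sHK; rewrite mxrank_ker mxrank_tr (eqP rG) (eqP rH).
case=> _; rewrite eqxx => /esym hK; apply: submx_trans hK; exact/sub_kermxP.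
Qed.

Lemma gdual_sub (F : finFieldType) p e s n k2 d2
  (chp : p \in [pchar F]) (cF : #|F| = (p ^ e)%N) (se : (s <= e)%N)
  (G2 : 'M[F]_(k2, n)) (H2 : 'M[F]_(n - k2, n)) :
  lin_code_gen_par d2 G2 H2 -> forall x : 'rV[F]_n,
  in_gdual p s G2 x -> (x <= mxpow (p ^ (e - s)) H2)%MS.
Proof.
move=> hc x /forallP hx.
have hy : mxpow (p ^ s) x *m G2^T = 0.
  apply/matrixP => i j; rewrite ord1 !mxE.
  have := hx (row j G2); rewrite row_sub /= => /eqP h.
  transitivity (gform p s (row j G2) x); last exact: h.
  rewrite /gform; apply: eq_bigr => l _; by rewrite !mxE mulrC.
have := kerH hc hy => /(submx_mxpow chp (e - s)).
by rewrite (mxpowK chp cF) ?subnKC.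
Qed.

Lemma dual_lem (F : finFieldType) p e s n k2 d2
  (chp : p \in [pchar F]) (cF : #|F| = (p ^ e)%N) (se : (s <= e)%N)
  (G2 : 'M[F]_(k2, n)) (H2 : 'M[F]_(n - k2, n)) :
  lin_code_gen_par d2 G2 H2 -> forall b : 'rV[F]_n,
  b *m (mxpow (p ^ (e - s)) H2)^T = 0 -> (mxpow (p ^ s) b <= G2)%MS.
Proof.
move=> hc b hb; case: hc => _ _ par _; rewrite par.
have : mxpow (p ^ s) (b *m (mxpow (p ^ (e - s)) H2)^T) = 0 by rewrite hb mxpow0.
rewrite (mxpowM chp) !mxpow_tr (mxpowK chp cF) ?subnK // => h.
apply/eqP; have := congr1 trmx h; by rewrite trmx_mul trmxK mxpow_tr trmx0.
Qed.

Lemma incl_case1 (F : finFieldType) n k1 d1 r (G1 : 'M[F]_(k1, n)) (H1 : 'M[F]_(n - k1, n))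
  (A : 'M[F]_(r, n)) :
  lin_code_gen_par d1 G1 H1 -> (\rank (col_mx G1 A) <= k1)%N -> (A <= G1)%MS.
Proof.
case=> rG _ _ _; rewrite -(addsmxE G1 A) => hr.
have := geq_leqif (mxrank_leqif_sup (addsmxSl G1 A)); rewrite (eqP rG) hr => /esym.
by rewrite addsmx_sub => /andP[].
Qed.

Lemma span_subM (F : finFieldType) n m (M : 'M[F]_(m, n)) (X : seq 'rV[F]_n) :
  (forall x, x \in X -> (x <= M)%MS) -> forall x, x \in <<X>>%VS -> (x <= M)%MS.
Proof.
move=> hX x hx; rewrite (coord_span (X := in_tuple X) hx).
apply: summx_sub => i _; apply: scalemx_sub; apply: hX.
by apply: mem_nth.
Qed.

Lemma incl_case2 (F : finFieldType) p e s n k1 k2 d1 d2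
  (chp : p \in [pchar F]) (cF : #|F| = (p ^ e)%N) (se : (s <= e)%N)
  (G1 : 'M[F]_(k1, n)) (H1 : 'M[F]_(n - k1, n))
  (G2 : 'M[F]_(k2, n)) (H2 : 'M[F]_(n - k2, n)) :
  lin_code_gen_par d1 G1 H1 -> lin_code_gen_par d2 G2 H2 ->
  (n - k2 <= dim_cap_gdual p s G1 G2)%N -> (mxpow (p ^ (e - s)) H2 <= G1)%MS.
Proof.
move=> hc1 hc2 hd; set A := mxpow (p ^ (e - s)) H2.
set S := [set x : 'rV[F]_n | (x <= G1)%MS && in_gdual p s G2 x].
pose f := linfun (mulmxr A : 'rV[F]_(n - k2) -> 'rV[F]_n).
have hV : (<<enum S>> <= limg f)%VS.
  apply/span_subvP => x; rewrite mem_enum inE => /andP[_].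
  move/(gdual_sub chp cF se hc2)/submxP => [D ->].
  by rewrite -[D *m A](lfunE (mulmxr A)) memv_img ?memvf.
have hdim : (\dim (limg f) <= n - k2)%N.
  have := limg_ker_dim f fullv; rewrite dimvf /dim /= mul1n => h; rewrite -[X in (_ <= X)%N]h.
  exact: leq_addl.
have heq : <<enum S>>%VS = limg f.
  apply/eqP; rewrite -(geq_leqif (dimv_leqif_eq hV)).
  exact: leq_trans hdim hd.
apply/row_subP => i; apply: (span_subM (X := enum S)).
  by move=> x; rewrite mem_enum inE => /andP[].
rewrite heq; have /submxP [D ->] := row_sub i A.
by rewrite -[D *m A](lfunE (mulmxr A)) memv_img ?memvf.
Qed.

Lemma natr_inj_lt (F : finFieldType) p (chp : p \in [pchar F]) k j :
  (k < p)%N -> (j < p)%N -> (k%:R = j%:R :> F) -> k = j.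
Proof.
move=> hk hj e; case: (ltngtP k j) => // h; exfalso.
  have d : (p %| j - k)%N by rewrite (dvdn_pcharf chp) natrB ?(ltnW h) // e subrr.
  have := dvdn_leq _ d; rewrite subn_gt0 h; lia.
have d : (p %| k - j)%N by rewrite (dvdn_pcharf chp) natrB ?(ltnW h) // e subrr.
have := dvdn_leq _ d; rewrite subn_gt0 h; lia.
Qed.

Lemma natr_mod (F : finFieldType) p (chp : p \in [pchar F]) a :
  (a %% p)%:R = a%:R :> F.
Proof. by rewrite {2}(divn_eq a p) natrD natrM (pcharf0 chp) mulr0 add0r. Qed.

Lemma natr_eq_mod (F : finFieldType) p (chp : p \in [pchar F]) a b :
  a%:R = b%:R :> F -> (a %% p = b %% p)%N.
Proof.
have p0 := prime_gt0 (pcharf_prime chp).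
move=> h; apply: (natr_inj_lt chp); rewrite ?ltn_pmod // !(natr_mod chp) //.
Qed.

Lemma Fp_fixed (F : finFieldType) p (chp : p \in [pchar F]) (t : F) :
  t ^+ p = t -> exists k, (k < p)%N /\ k%:R = t.
Proof.
move=> ht; have pp := pcharf_prime chp.
case: (boolP [exists k : 'I_p, k%:R == t]) => [/existsP[k /eqP hk] | /existsPn hn].
  by exists k; split.
exfalso.
pose P : {poly F} := 'X^p - 'X.
pose rs := t :: [seq (k%:R : F) | k <- iota 0 p].
have sP : size P = p.+1.
  rewrite /P size_polyDl ?size_polyXn // size_polyN size_polyX ltnS prime_gt1 //.
have hP0 : P != 0 by rewrite -size_poly_eq0 sP.
have hr : all (root P) rs.
  rewrite /= rootE /P !hornerE ht subrr eqxx /=.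
  apply/allP => x /mapP[k _ ->]; rewrite rootE !hornerE.
  by rewrite -(pFrobenius_autE chp) rmorph_nat subrr.
have hu : uniq rs.
  rewrite /= map_inj_in_uniq ?iota_uniq ?andbT.
    apply/mapP => [[k]]; rewrite mem_iota add0n => /andP[_ hk] ht'.
    by have := hn (Ordinal hk); rewrite /= ht' eqxx.
  move=> a b; rewrite !mem_iota !add0n => /andP[_ ha] /andP[_ hb].
  exact: (natr_inj_lt chp ha hb).
by have := max_poly_roots hP0 hr hu; rewrite /= size_map size_iota sP ltnn.
Qed.

Lemma trF_add (F : finFieldType) p e (chp : p \in [pchar F]) (x y : F) :
  trF p e (x + y) = trF p e x + trF p e y.
Proof. by rewrite /trF -big_split; apply: eq_bigr => i _; exact: frobD. Qed.

Lemma trF_frob (F : finFieldType) p e (chp : p \in [pchar F]) (cF : #|F| = (p ^ e)%N)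
  (he : (0 < e)%N) (x : F) : (trF p e x) ^+ p = trF p e x.
Proof.
case: e cF he => // e' cF _; rewrite /trF.
have := frob_sum chp 1 (fun i : 'I_e'.+1 => x ^+ (p ^ i)); rewrite expn1 => ->.
rewrite big_ord_recr big_ord_recl /= -exprM -expnSr -cF expf_card expn0 expr1 addrC.
by congr (_ + _); apply: eq_bigr => i _; rewrite -exprM -expnSr.
Qed.

Lemma tr_natP (F : finFieldType) p e (chp : p \in [pchar F]) (cF : #|F| = (p ^ e)%N)
  (he : (0 < e)%N) (x : F) :
  (tr_nat p e x < p)%N /\ (tr_nat p e x)%:R = trF p e x.
Proof.
rewrite /tr_nat; case: pickP => [k /eqP hk | hn]; first by split.
exfalso; have [k [hk ek]] := Fp_fixed chp (trF_frob chp cF he x).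
by have := hn (Ordinal hk); rewrite /= ek eqxx.
Qed.

Lemma tr_nat_add (F : finFieldType) p e (chp : p \in [pchar F]) (cF : #|F| = (p ^ e)%N)
  (he : (0 < e)%N) (x y : F) :
  (tr_nat p e (x + y)%R %% p = (tr_nat p e x + tr_nat p e y) %% p)%N.
Proof.
apply: (natr_eq_mod chp).
by rewrite natrD !(proj2 (tr_natP chp cF he _)) trF_add.
Qed.

Lemma tr_nonzero (F : finFieldType) p e (chp : p \in [pchar F]) (cF : #|F| = (p ^ e)%N)
  (he : (0 < e)%N) : exists mu : F, trF p e mu != 0.
Proof.
have pp := pcharf_prime chp; have p1 := prime_gt1 pp.
case: (boolP [exists mu : F, trF p e mu != 0]) => [/existsP[mu hmu] | /existsPn hn].
  by exists mu.
exfalso; case: e cF he hn => // e' cF _ hn.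
pose P : {poly F} := \sum_(i < e'.+1) 'X^(p ^ i).
have hev x : P.[x] = trF p e'.+1 x.
  by rewrite /P horner_sum; apply: eq_bigr => i _; rewrite hornerXn.
have hP0 : P != 0.
  apply/negP => /eqP h.
  have := congr1 (fun q : {poly F} => q`_(p ^ e')) h.
  rewrite coef0 /P coef_sum (bigD1 ord_max) //= coefXn eqxx big1 ?addr0.
    by move/eqP; rewrite oner_eq0.
  move=> i hi; rewrite coefXn eqn_exp2l //.
  suff -> : (e' == i) = false by [].
  by apply/eqP => hh; move/eqP: hi; apply; apply: val_inj; rewrite /= -hh.
have sP : (size P <= (p ^ e').+1)%N.
  apply: leq_trans (size_sum _ _ _) _; apply/bigmax_leqP => i _.
  by rewrite size_polyXn ltnS leq_pexp2l ?prime_gt0 // -ltnS.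
have hr : all (root P) (enum F).
  by apply/allP => x _; rewrite rootE hev; have := hn x; rewrite negbK.
have := max_poly_roots hP0 hr (enum_uniq F); rewrite -cardT cF.
have : ((p ^ e').+1 <= p ^ e'.+1)%N.
  rewrite expnS; have : (0 < p ^ e')%N by rewrite expn_gt0 prime_gt0.
  move: (p ^ e')%N => t; nia.
move=> h1 h2; have := leq_trans h2 (leq_trans sP h1); by rewrite ltnn.
Qed.

Lemma omega_p p : (0 < p)%N -> omega p ^+ p = 1.
Proof. by move=> p0; rewrite /omega exprAC rootCK // sqrrN expr1n. Qed.

Lemma m1_ne1 : ((-1 : algC) == 1) = false.
Proof. by rewrite lt_eqF // (lt_trans (ltrN10 _) ltr01). Qed.

Lemma root_ne_m1 p : (1 < p)%N -> p.-root (-1 : algC) != -1.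
Proof.
move=> p1; have p0 : (0 < p)%N by apply: ltnW.
have hz0 : (0 < p * 2)%N by rewrite muln_gt0 p0.
have [z hz] := C_prim_root_exists hz0.
have zp : z ^+ p = -1.
  have h2 : (z ^+ p) ^+ 2 = 1 by rewrite -exprM prim_expr_order.
  have : z ^+ p != 1.
    rewrite -(prim_order_dvd hz); apply/negP => /(dvdn_leq p0).
    by rewrite leqNgt ltn_Pmulr.
  by move: h2 => /eqP; rewrite sqrf_eq1 => /orP[/eqP -> | /eqP ->]; rewrite ?eqxx.
have zn : z != -1.
  apply/eqP => zm; have : (p * 2 %| 2)%N by rewrite (prim_order_dvd hz) zm sqrrN expr1n.
  move/(dvdn_leq (isT : (0 < 2)%N)); lia.
have [y [hy1 hy2 hy3]] : exists y : algC, [/\ y ^+ p = -1, 0 <= 'Im y & y != -1].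
  case: (boolP (0 <= 'Im z)) => hz'; first by exists z.
  exists z^*; split.
  - by rewrite -rmorphXn zp rmorphN1.
  - rewrite Im_conj oppr_ge0 real_leNgt ?Creal_Im ?rpred0 //.
    by apply: contra hz' => /ltW.
  - apply/eqP => hzc; move/eqP: zn; apply; by rewrite -[z]conjCK hzc rmorphN1.
apply/eqP => hr.
have h1 := rootC_Re_max p0 hy1 hy2; rewrite hr raddfN /= (Creal_ReP 1 (rpred1 _)) in h1.
have ny : `|y| = 1.
  apply/eqP; rewrite -(pexpr_eq1 p0) ?normr_ge0 // -normrX hy1 normrN normr1 //.
have hR : 'Re (- y) = `|- y|.
  apply/le_anti; rewrite (leif_Re_Creal (- y)).1 /= normrN ny raddfN /=.
  by rewrite lerNr.
have := leif_Re_Creal (- y); case=> _; rewrite hR eqxx => /esym hge.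
have : - y = 1 by rewrite -(ger0_norm hge) normrN ny.
by move/eqP; rewrite eqr_oppLR => /eqP hy; move/eqP: hy3.
Qed.

Lemma omega_ne1 p : prime p -> omega p != 1.
Proof.
move=> pp; have p1 := prime_gt1 pp; have p0 := prime_gt0 pp.
apply/eqP; rewrite /omega => /eqP; rewrite sqrf_eq1 => /orP[] /eqP hr.
  have := rootCK p0 (-1 : algC); rewrite hr expr1n => /eqP.
  by rewrite eq_sym m1_ne1.
by move/eqP: (root_ne_m1 p1).
Qed.

Lemma omega_dvd p k : prime p -> omega p ^+ k = 1 -> (p %| k)%N.
Proof.
move=> pp hk; have p0 := prime_gt0 pp.
have [m hm hmp] := prim_order_exists p0 (omega_p p0).
case: (eqVneq m 1%N) => hm1.
  have := prim_order_dvd hm 1; rewrite hm1 dvd1n expr1 => /esym/eqP h.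
  by move: (omega_ne1 pp); rewrite h eqxx.
have hmp' : m = p by apply/(prime_nt_dvdP pp hm1).
by rewrite -hmp' (prim_order_dvd hm) hk.
Qed.

Lemma tr_nat0 (F : finFieldType) p e (chp : p \in [pchar F]) (cF : #|F| = (p ^ e)%N)
  (he : (0 < e)%N) : tr_nat p e (0 : F) = 0%N.
Proof.
have [h1 h2] := tr_natP chp cF he 0.
apply: (natr_inj_lt chp) => //; first by rewrite prime_gt0 ?(pcharf_prime chp).
rewrite h2 /trF big1 // => i _; exact: frob0.
Qed.

Lemma om_tr_add (F : finFieldType) p e (chp : p \in [pchar F]) (cF : #|F| = (p ^ e)%N)
  (he : (0 < e)%N) (x y : F) :
  omega p ^+ tr_nat p e (x + y) = omega p ^+ tr_nat p e x * omega p ^+ tr_nat p e y.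
Proof.
have p0 := prime_gt0 (pcharf_prime chp).
by rewrite -(expr_mod _ (omega_p p0)) (tr_nat_add chp cF he) expr_mod ?omega_p // exprD.
Qed.

Lemma om_tr_sum (F : finFieldType) p e (chp : p \in [pchar F]) (cF : #|F| = (p ^ e)%N)
  (he : (0 < e)%N) n (f : 'I_n -> F) :
  omega p ^+ (\sum_i tr_nat p e (f i)) = omega p ^+ tr_nat p e (\sum_i f i).
Proof.
rewrite expr_sum; symmetry.
apply: (big_morph (fun x : F => omega p ^+ tr_nat p e x)).
  exact: om_tr_add.
by rewrite (tr_nat0 chp cF he) expr0.
Qed.

Definition chi (F : finFieldType) n p e (b y : 'rV[F]_n) : algC :=
  omega p ^+ (\sum_(i < n) tr_nat p e (b ord0 i * y ord0 i)%R).

Lemma chi_add (F : finFieldType) p e (chp : p \in [pchar F]) (cF : #|F| = (p ^ e)%N)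
  (he : (0 < e)%N) n (b y z : 'rV[F]_n) :
  chi p e b (y + z) = chi p e b y * chi p e b z.
Proof.
rewrite /chi !expr_sum -big_split; apply: eq_bigr => i _.
by rewrite mxE mulrDr (om_tr_add chp cF he).
Qed.

Lemma chi_exists (F : finFieldType) p e (chp : p \in [pchar F]) (cF : #|F| = (p ^ e)%N)
  (he : (0 < e)%N) n r (A : 'M[F]_(r, n)) (b : 'rV[F]_n) :
  b *m A^T != 0 -> exists2 a0 : 'rV[F]_n, (a0 <= A)%MS & chi p e b a0 != 1.
Proof.
have pp := pcharf_prime chp.
move=> hb; have [j hj] : exists j, (b *m A^T) 0 j != 0.
  case: (boolP [exists j, (b *m A^T) 0 j != 0]) => [/existsP//|/existsPn hn].
  move/eqP: hb; case; apply/matrixP => i j; rewrite ord1 [RHS]mxE.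
  by apply/eqP; move: (hn j); rewrite negbK.
have [mu hmu] := tr_nonzero chp cF he.
set t := (b *m A^T) 0 j in hj.
have ht : t = \sum_l b 0 l * row j A 0 l by rewrite /t mxE; apply: eq_bigr => l _; rewrite !mxE.
exists ((mu / t) *: row j A); first by apply: scalemx_sub; exact: row_sub.
rewrite /chi (om_tr_sum chp cF he).
have -> : \sum_i b ord0 i * ((mu / t) *: row j A) ord0 i = mu.
  transitivity (mu / t * t); last by rewrite divfK.
  rewrite ht mulr_sumr; apply: eq_bigr => l _; rewrite mxE; ring.
have [h1 h2] := tr_natP chp cF he mu.
apply/negP => /eqP /(omega_dvd pp) hd.
have := dvdn_leq _ hd; have := hmu; rewrite -h2.
case: (tr_nat p e mu) h1 h2 => [|k] h1 h2; first by rewrite eqxx.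
move=> _ /(_ isT); rewrite leqNgt h1.
done.
Qed.

Lemma qscaleE (F : finFieldType) n (k : algC) (f : qstate F n) y : (k *: f) y = k * f y.
Proof. by rewrite ffunE. Qed.

Definition psi (F : finFieldType) n m r (A : 'M[F]_(m, n)) (B : 'M[F]_(r, n))
  (z : 'rV[F]_r) : qstate F n :=
  [ffun y => if ((y - z *m B) <= A)%MS then 1 else 0].

Definition Xs (F : finFieldType) n m r (A : 'M[F]_(m, n)) (B : 'M[F]_(r, n)) :=
  [tuple psi A B (enum_val i) | i < #|{: 'rV[F]_r}|].

Lemma Xs_free (F : finFieldType) n m r (A : 'M[F]_(m, n)) (B : 'M[F]_(r, n)) :
  (forall w : 'rV[F]_r, (w *m B <= A)%MS -> w = 0) -> free (Xs A B).
Proof.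
move=> hAB; apply/freeP => k hk i.
have := congr1 (fun f : qstate F n => f (enum_val i *m B)) hk.
rewrite sum_ffunE ffunE (bigD1 i) //= big1 ?addr0.
  by rewrite qscaleE nth_mktuple ffunE subrr sub0mx mulr1.
move=> j hj; rewrite qscaleE nth_mktuple ffunE -mulmxBl.
case: ifP => [/hAB /eqP|]; last by rewrite mulr0.
rewrite subr_eq0 => /eqP /enum_val_inj ij; by move: hj; rewrite ij eqxx.
Qed.

Lemma Xs_dim (F : finFieldType) n m r (A : 'M[F]_(m, n)) (B : 'M[F]_(r, n)) :
  (forall w : 'rV[F]_r, (w *m B <= A)%MS -> w = 0) ->
  \dim <<Xs A B>> = (#|F| ^ r)%N.
Proof.
move=> h; rewrite (eqnP (Xs_free h)) size_tuple card_mx mul1n //.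
Qed.

Lemma sub_addA (F : finFieldType) n m (A : 'M[F]_(m, n)) (x a : 'rV[F]_n) :
  (a <= A)%MS -> ((x + a)%R <= A)%MS = (x <= A)%MS.
Proof.
move=> ha; apply/idP/idP => h; last exact: addmx_sub h ha.
have hna : (- a <= A)%MS by rewrite -scaleN1r scalemx_sub.
by rewrite -[x](addrK a); apply: addmx_sub.
Qed.

Lemma memQ (F : finFieldType) n m r k (A : 'M[F]_(m, n)) (B : 'M[F]_(r, n))
  (G : 'M[F]_(k, n)) (u : qstate F n) :
  (A <= G)%MS -> (B <= G)%MS -> u \in <<Xs A B>>%VS ->
  (forall y, ~~ (y <= G)%MS -> u y = 0) /\
  (forall y a, (a <= A)%MS -> u (y + a) = u y).
Proof.
move=> hA hB hu; have {}hu := coord_span hu.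
split => [y hy | y a ha]; rewrite hu !sum_ffunE.
  apply: big1 => i _; rewrite qscaleE nth_mktuple ffunE.
  case: ifP; last by rewrite mulr0.
  move=> h; exfalso; move/negP: hy; apply.
  rewrite -[y](subrK (enum_val i *m B)); apply: addmx_sub.
    exact: submx_trans h hA.
  exact: submx_trans (submxMl _ _) hB.
apply: eq_bigr => i _; rewrite !qscaleE !nth_mktuple !ffunE.
by rewrite addrAC sub_addA.
Qed.

Lemma hwt_gt0 (F : finFieldType) n (x : 'rV[F]_n) : x != 0 -> (0 < hwt x)%N.
Proof.
move=> hx; rewrite /hwt card_gt0; apply/set0Pn.
case: (boolP [exists j, x ord0 j != 0]) => [/existsP[j hj]|/existsPn hn].
  by exists j; rewrite inE.
move/eqP: hx; case; apply/matrixP => i j; rewrite ord1 [RHS]mxE.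
by apply/eqP; move: (hn j); rewrite negbK.
Qed.

Lemma hwt_qw_l (F : finFieldType) n (a b : 'rV[F]_n) : (hwt a <= qweight a b)%N.
Proof. by apply: subset_leq_card; apply/subsetP => i; rewrite !inE => ->. Qed.

Lemma hwt_qw_r (F : finFieldType) n (a b : 'rV[F]_n) : (hwt b <= qweight a b)%N.
Proof. by apply: subset_leq_card; apply/subsetP => i; rewrite !inE => ->; rewrite orbT. Qed.

Lemma main_dist (F : finFieldType) (p e s n k1 k2 d1 d2 r : nat)
  (chp : p \in [pchar F]) (cF : #|F| = (p ^ e)%N) (he : (0 < e)%N) (se : (s <= e)%N)
  (G1 : 'M[F]_(k1, n)) (H1 : 'M[F]_(n - k1, n))
  (G2 : 'M[F]_(k2, n)) (H2 : 'M[F]_(n - k2, n)) (B : 'M[F]_(r, n)) :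
  lin_code_gen_par d1 G1 H1 -> lin_code_gen_par d2 G2 H2 ->
  (mxpow (p ^ (e - s)) H2 <= G1)%MS -> (B <= G1)%MS ->
  forall u v, u \in <<Xs (mxpow (p ^ (e - s)) H2) B>>%VS ->
  v \in <<Xs (mxpow (p ^ (e - s)) H2) B>>%VS ->
  forall (c : nat) (a b : 'rV[F]_n),
  (qweight a b <= (minn d1 d2).-1)%N -> (a = 0 -> b = 0 -> qinner u v = 0) ->
  qinner u (qerr p e c a b v) = 0.
Proof.
move=> hc1 hc2 hAG hBG u v hu hv c a b hw hz.
set A := mxpow (p ^ (e - s)) H2 in hAG hu hv.
have [hu1 hu2] := memQ hAG hBG hu; have [hv1 hv2] := memQ hAG hBG hv.
have hd1 : forall x, (x <= G1)%MS -> x != 0 -> (d1 <= hwt x)%N by case: hc1 => _ _ _ [].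
have hd2 : forall x, (x <= G2)%MS -> x != 0 -> (d2 <= hwt x)%N by case: hc2 => _ _ _ [].
have ha := hwt_qw_l a b; have hb := hwt_qw_r a b.
rewrite /qinner.
case: (eqVneq a 0) => [az | anz]; last first.
  case: (boolP (a <= G1)%MS) => haG.
    have := hd1 _ haG anz; have := hwt_gt0 anz; lia.
  apply: big1 => x _; rewrite ffunE.
  case: (boolP (x <= G1)%MS) => hx; last by rewrite hu1 // conjC0 mul0r.
  rewrite hv1 ?mulr0 //; apply: contra haG => hxa.
  have hna : (- (x - a) <= G1)%MS by rewrite -scaleN1r scalemx_sub.
  have -> : a = x + - (x - a) by rewrite opprB addrC subrK.
  exact: addmx_sub hx hna.
subst a.
case: (eqVneq b 0) => [bz | bnz].
  subst b; transitivity (omega p ^+ c * qinner u v); last by rewrite hz // mulr0.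
  rewrite /qinner mulr_sumr.
  apply: eq_bigr => x _; rewrite ffunE subr0 big1 ?expr0 ?mulr1.
    by rewrite mulrCA.
  by move=> i _; rewrite mxE mul0r (tr_nat0 chp cF he).
have hbA : b *m A^T != 0.
  apply/negP => /eqP h0; have := dual_lem chp cF se hc2 h0 => hG.
  have := hd2 _ hG; rewrite (mxpow_eq0 chp) (hwt_mxpow chp) => /(_ bnz).
  have := hwt_gt0 bnz; lia.
have [a0 ha0 hchi] := chi_exists chp cF he hbA.
set T := \sum_x (u x)^* * v x * chi p e b x.
have hT : T = T * chi p e b a0.
  rewrite {1}/T (reindex_inj (addIr a0)) /= /T mulr_suml.
  apply: eq_bigr => x _; rewrite hu2 // hv2 // (chi_add chp cF he); ring.
have T0 : T = 0.
  move/eqP: hT; rewrite -subr_eq0 -{1}(mulr1 T) -mulrBr mulf_eq0 subr_eq0 (eq_sym 1).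
  by rewrite eq_sym (negPf hchi) orbF => /eqP.
transitivity (omega p ^+ c * T); last by rewrite T0 mulr0.
rewrite /T mulr_sumr; apply: eq_bigr => x _; rewrite ffunE subr0 /chi; ring.
Qed.

Theorem theorem2p6 (F : finFieldType) (p e s n k1 k2 d1 d2 : nat)
  (G1 : 'M[F]_(k1, n)) (H1 : 'M[F]_(n - k1, n))
  (G2 : 'M[F]_(k2, n)) (H2 : 'M[F]_(n - k2, n)) :
  prime p -> p \in [pchar F] -> #|F| = (p ^ e)%N -> (0 < e)%N -> (s < e)%N ->
  lin_code_gen_par d1 G1 H1 ->
  lin_code_gen_par d2 G2 H2 ->
  (n <= k1 + k2)%N ->
  ((\rank (col_mx G1 (mxpow (p ^ (e - s)) H2)) <= k1)%N \/
   (\rank (G1 *m (mxpow (p ^ (e - s)) G2)^T) = (k1 - dim_cap_gdual p s G1 G2)%N /\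
    (k1 - dim_cap_gdual p s G1 G2 <= k1 + k2 - n)%N)) ->
  exists (d : nat) (Q : {vspace qstate F n}),
    is_qcode p e Q (k1 + k2 - n) d /\ (minn d1 d2 <= d)%N.
Proof.
move=> pp chp cF he se hc1 hc2 hn hcase.
have se' : (s <= e)%N := ltnW se.
set A := mxpow (p ^ (e - s)) H2 in hcase *.
have rA : \rank A = (n - k2)%N.
  rewrite (rank_mxpow chp cF) ?leq_subr //; case: hc2 => _ rH _ _; exact: (eqP rH).
have hAG : (A <= G1)%MS.
  case: hcase => [h | [_ h]]; first exact: incl_case1 hc1 h.
  apply: (incl_case2 chp cF se' hc1 hc2).
  move: h; set dc := dim_cap_gdual p s G1 G2; lia.
set D := (G1 :\: A)%MS.
set B := row_base D.
have hBG : (B <= G1)%MS by rewrite eq_row_base diffmxSl.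
have hBA : forall w : 'rV_(\rank D), (w *m B <= A)%MS -> w = 0.
  move=> w hw.
  have : (w *m B <= D :&: A)%MS.
    by rewrite sub_capmx hw (submx_trans (submxMl _ _)) // eq_row_base.
  rewrite capmx_diff submx0 => /eqP h.
  by apply: (row_free_inj (row_base_free D)); rewrite mul0mx.
have rD : \rank D = (k1 + k2 - n)%N.
  have := mxrank_cap_compl G1 A.
  have e1 := elimT capmx_idPr hAG; rewrite e1 rA.
  case: hc1 => rG _ _ _; rewrite (eqP rG) -/D; have := rank_leq_col G2; case: hc2 => rG2 _ _ _; rewrite (eqP rG2); lia.
exists (minn d1 d2), <<Xs A B>>%VS; split => //; split.
  by rewrite (Xs_dim hBA) rD.
rewrite /qmin_dist; case: ifP => _.
  move=> u hu c a b /andP[h1 h2].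
  apply: (main_dist chp cF he se' hc1 hc2 hAG hBG hu hu c h2) => az bz.
  by move: h1; rewrite az bz /qweight; rewrite (eq_card0 (A := [set i | _])) //; move=> i; rewrite !inE !mxE eqxx.
move=> u v hu hv huv c a b hw.
exact: (main_dist chp cF he se' hc1 hc2 hAG hBG hu hv c hw).
Qed.
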